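(* There is an absolute constant $c>0$ such that the following holds. Let $H=(V,E)$ be a hypergraph of rank at most $r\ge2$ and maximum degree at most $\Delta$, with an edge-weighting $a$. Let $h'$ be a fractional matching of $H$ with $a(h')\ge a^*(H)/2$, given locally (each edge knows $h'(e)$). 1. There is a deterministic constant-round LOCAL algorithm that produces a $10\Delta$-proper fractional matching $h$ with $a(h)\ge c\,a^*(H)$. 2. There is a randomized constant-round LOCAL algorithm that produces a $\lceil20\log r\rceil$-proper fractional matching $h$ with $\mathbf E[a(h)]\ge c\,a^*(H)$.
   Context: **Fractional matchings.** A fractional matching is $h:E\to[0,1]$ with $\sum_{e\ni v}h(e)\le1$ for every vertex $v$, and $a(h)=\sum_e a(e)h(e)$. Then $a^*(H)$ is the maximum of $a(h)$ over all fractional matchings. **$q$-proper.** A fractional matching is $q$-proper if all its values lie in $\{0,1/q,2/q,\dots\}$. **LOCAL model.** The model is run on the incidence graph of $H$ (one node per vertex and per edge, where $v$ and $e$ are adjacent iff $v\in e$). In synchronous rounds, nodes exchange unbounded messages with neighbours. In the randomized variant, nodes have private random bits. *)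

(* Defs.v *)
From HB Require Import structures.
From mathcomp Require Import all_boot all_order all_algebra.
Set Implicit Arguments. Unset Strict Implicit. Unset Printing Implicit Defensive.
Import Order.TTheory GRing.Theory Num.Theory.
Local Open Scope ring_scope.

Section Hypergraph.
Variables (R : realFieldType) (V E : finType) (ends : E -> {set V}).

Definition frac_matching (h : E -> R) : Prop :=
  (forall e, 0 <= h e <= 1) /\ (forall v, \sum_(e | v \in ends e) h e <= 1).

Definition weight (a h : E -> R) : R := \sum_e a e * h e.

Definition qproper (q : nat) (h : E -> R) : Prop :=
  forall e, exists k : nat, h e = k%:R / q%:R.

Definition is_astar (a : E -> R) (x : R) : Prop :=
  (exists2 h, frac_matching h & weight a h = x) /\
  (forall h, frac_matching h -> weight a h <= x).

Definition rank_le (r : nat) : Prop := forall e, (#|ends e| <= r)%N.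
Definition maxdeg_le (D : nat) : Prop :=
  forall v, (#|[set e | v \in ends e]| <= D)%N.
End Hypergraph.

(* An instance: a hypergraph (iV, iE, iends), edge weights iw, the input
   fractional matching ih0, and identifiers for all nodes of the incidence
   graph. *)
Record instance (R : Type) : Type := Instance {
  iV : finType;
  iE : finType;
  iends : iE -> {set iV};
  iw : iE -> R;
  ih0 : iE -> R;
  iidV : iV -> nat;
  iidE : iE -> nat }.

Section Local.
Variable R : realFieldType.

Definition node (I : instance R) : finType := (iV I + iE I)%type.

Definition iadj (I : instance R) (x y : node I) : bool :=
  match x, y with
  | inl v, inr e => v \in iends e
  | inr e, inl v => v \in iends e
  | _, _ => false
  end.

Fixpoint ball (I : instance R) (T : nat) (x : node I) : {set node I} :=
  match T with
  | 0 => [set x]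
  | T'.+1 => ball T' x :|: [set y | [exists z in ball T' x, iadj z y]]
  end.

(* local input of a node: its identifier, (for edges) weight and h'-value,
   and its private random value of type Om *)
Inductive nlabel (Om : Type) : Type :=
| LV of nat & Om
| LE of nat & R & R & Om.

Definition lab (Om : Type) (I : instance R) (rho : node I -> Om) (x : node I)
  : nlabel Om :=
  match x with
  | inl v => LV (iidV v) (rho (inl v))
  | inr e => LE (iidE e) (iw e) (ih0 e) (rho (inr e))
  end.

Definition nounif (I : instance R) : node I -> unit := fun _ => tt.

Definition ids_unique (I : instance R) : Prop :=
  injective (fun x : node I => match x with inl v => iidV v | inr e => iidE e end).

Definition ball_iso (Om : Type) (T : nat)
  (I1 : instance R) (rho1 : node I1 -> Om) (x1 : node I1)
  (I2 : instance R) (rho2 : node I2 -> Om) (x2 : node I2) : Prop :=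
  exists f : node I1 -> node I2,
    [/\ f x1 = x2,
        {in ball T x1 &, injective f},
        f @: ball T x1 = ball T x2,
        {in ball T x1, forall y, lab rho2 (f y) = lab rho1 y} &
        {in ball T x1 &, forall y z, iadj (f y) (f z) = iadj y z}].

(* A T-round LOCAL algorithm: the output of each edge node depends only on
   the (labelled) radius-T ball around it. *)
Definition local (Om : Type) (T : nat)
  (alg : forall I : instance R, (node I -> Om) -> iE I -> R) : Prop :=
  forall (I1 I2 : instance R) (rho1 : node I1 -> Om) (rho2 : node I2 -> Om)
         (e1 : iE I1) (e2 : iE I2),
    ball_iso T rho1 (inr e1) rho2 (inr e2) -> alg I1 rho1 e1 = alg I2 rho2 e2.

(* Standing assumptions: H a hypergraph (a set system of nonempty edges) of
   rank <= r, r >= 2, max degree <= D, nonnegative weights, unique ids. *)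
Definition good_instance (r D : nat) (I : instance R) : Prop :=
  [/\ (2 <= r)%N /\ injective (@iends R I), (forall e : iE I, iends e != set0),
      rank_le (@iends R I) r, maxdeg_le (@iends R I) D &
      (forall e : iE I, 0 <= iw e) /\ ids_unique I].

(* probability of a random assignment om, each node drawing independently
   from the distribution pr (its own initial label) *)
Definition assign_prob (Om : finType) (pr : nlabel unit -> Om -> R)
  (I : instance R) (om : {ffun node I -> Om}) : R :=
  \prod_(x : node I) pr (lab (@nounif I) x) (om x).

End Local.

(* ceil(20 log_2 r) = least q with r^20 <= 2^q *)
Definition q_rand (r : nat) : nat := up_log 2 (r ^ 20).

(* Main.v *)
Require Import Defs.
From HB Require Import structures.
From mathcomp Require Import all_boot all_order all_algebra.
From mathcomp Require Import ring lra zify.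
Set Implicit Arguments. Unset Strict Implicit. Unset Printing Implicit Defensive.
Import Order.TTheory GRing.Theory Num.Theory.
Local Open Scope ring_scope.

Section Floor.
Variable R : realFieldType.

Fixpoint flr (y : R) (n : nat) : nat :=
  match n with 0 => 0%N | n'.+1 => if n%:R <= y then n else flr y n' end.

Lemma flr_le y n : 0 <= y -> (flr y n)%:R <= y.
Proof. move=> y0; elim: n => [|n IH] //=; by case: ifP. Qed.

Lemma flr_leq y n : (flr y n <= n)%N.
Proof. elim: n => [|n IH] //=; case: ifP => // _; exact: leqW. Qed.

Lemma flr_gt y n : y < n%:R + 1 -> y < (flr y n)%:R + 1.
Proof.
elim: n => [|n IH] /=; first by rewrite add0r.
case: ifP => [//|]; move/negbT; rewrite -ltNge => H _.
by apply: IH; rewrite -natr1 in H.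
Qed.
End Floor.


Section Loc.
Variable R : realFieldType.

Lemma ball_self (I : instance R) T (x : node I) : x \in ball T x.
Proof. elim: T => [|T IH] /=; first by rewrite in_set1. by rewrite in_setU IH. Qed.

Lemma ball_mono (I : instance R) T (x y : node I) : y \in ball T x -> y \in ball T.+1 x.
Proof. by move=> H /=; rewrite in_setU H. Qed.

Lemma ball_adj (I : instance R) T (x y z : node I) :
  z \in ball T x -> iadj z y -> y \in ball T.+1 x.
Proof. move=> Hz Ha /=; rewrite in_setU; apply/orP; right; rewrite inE.
by apply/existsP; exists z; rewrite Hz Ha. Qed.

Lemma ball2_v (I : instance R) (e : iE I) v : v \in iends e -> inl v \in ball 2 (inr e).
Proof. move=> H; apply: ball_mono; apply: (ball_adj (z := inr e)) => //; exact: ball_self. Qed.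

Lemma ball2_f (I : instance R) (e f : iE I) v : v \in iends e -> v \in iends f ->
  inr f \in ball 2 (inr e).
Proof.
move=> H1 H2; apply: (ball_adj (z := inl v)) => //.
apply: (ball_adj (z := inr e)) => //; exact: ball_self.
Qed.

Variable Om : Type.

Lemma lab_inr (I1 I2 : instance R) (rho1 : node I1 -> Om) (rho2 : node I2 -> Om) f z :
  lab rho2 z = lab rho1 (inr f) ->
  exists f', [/\ z = inr f', ih0 f' = ih0 f & rho2 z = rho1 (inr f)].
Proof. case: z => [v|f'] //= [] _ _ H1 H2; exists f'; split => //. Qed.

Lemma lab_inl (I1 I2 : instance R) (rho1 : node I1 -> Om) (rho2 : node I2 -> Om) v z :
  lab rho2 z = lab rho1 (inl v) ->
  exists v', z = inl v' /\ rho2 z = rho1 (inl v).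
Proof. case: z => [v'|f'] //= [] _ H; exists v'; split => //. Qed.

End Loc.


Section Algs.
Variable R : realFieldType.

Definition det_alg (D : nat) (I : instance R) (e : iE I) : R :=
  let q := (10 * D)%N in ((flr (q%:R * ih0 e / 2) q).+1)%:R / q%:R.

Definition kk (q : nat) (x : R) : nat := flr (q%:R * x / 2) q.
Definition frc (q : nat) (x : R) : R := q%:R * x / 2 - (kk q x)%:R.
Definition pp (q : nat) (x : R) : R :=
  if (0 <= frc q x / 16%:R) && (frc q x / 16%:R <= 1) then frc q x / 16%:R else 0.
Definition prr (r D : nat) (l : nlabel R unit) (b : bool) : R :=
  match l with
  | LV _ _ => if b then 0 else 1
  | LE _ _ x _ => if b then pp (q_rand r) x else 1 - pp (q_rand r) x
  end.
Definition Ncnt (I : instance R) (om : node I -> bool) (v : iV I) : nat :=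
  #|[set f : iE I | (v \in iends f) && om (inr f)]|.
Definition kept (q : nat) (I : instance R) (om : node I -> bool) (e : iE I) : bool :=
  om (inr e) && [forall v, (v \in iends e) ==> (2 * Ncnt om v <= q)%N].
Definition ralg (r D : nat) (I : instance R) (om : node I -> bool) (e : iE I) : R :=
  ((kk (q_rand r) (ih0 e) + kept (q_rand r) om e)%N)%:R / (q_rand r)%:R.

Arguments det_alg : clear implicits.
Arguments ralg : clear implicits.
Arguments kept : clear implicits.
Lemma det_local (r D : nat) : local 0 (fun I (_ : node I -> unit) => det_alg D I).
Proof.
move=> I1 I2 rho1 rho2 e1 e2 [phi [He _ _ Hlab _]].
have := Hlab (inr e1) (ball_self _ _); rewrite He.
by rewrite /det_alg; case=> _ _ -> _.
Qed.

Section RL.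
Variables (I1 I2 : instance R) (rho1 : node I1 -> bool) (rho2 : node I2 -> bool).
Variables (e1 : iE I1) (e2 : iE I2) (phi : node I1 -> node I2).
Hypotheses (He : phi (inr e1) = inr e2)
  (Hinj : {in ball 2 (inr e1) &, injective phi})
  (Him : phi @: ball 2 (inr e1) = ball 2 (inr e2))
  (Hlab : {in ball 2 (inr e1), forall y, lab rho2 (phi y) = lab rho1 y})
  (Hadj : {in ball 2 (inr e1) &, forall y z, iadj (phi y) (phi z) = iadj y z}).

Lemma pre2 y : y \in ball 2 (inr e2) -> exists2 x, x \in ball 2 (inr e1) & y = phi x.
Proof. by rewrite -Him => /imsetP. Qed.

Lemma vfw v : v \in iends e1 -> exists v', [/\ phi (inl v) = inl v', v' \in iends e2 &
   Ncnt rho1 v = Ncnt rho2 v'].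
Proof.
move=> Hv; have Bv := ball2_v Hv.
have [v' [Ev' _]] := lab_inl (Hlab Bv).
have Hv' : v' \in iends e2.
  by have := Hadj Bv (ball_self _ _); rewrite He Ev' /= Hv.
exists v'; split => //.
pose g (f : iE I1) : iE I2 := if phi (inr f) is inr f' then f' else e2.
rewrite /Ncnt -(@card_in_imset _ _ g [set f : iE I1 | (v \in iends f) && rho1 (inr f)]).
  apply: eq_card => f'; apply/imsetP/idP.
  - move=> [f]; rewrite inE => /andP[Hf Hrf] ->.
    have Bf := ball2_f Hv Hf.
    have [f2 [Ef2 _ Er]] := lab_inr (Hlab Bf).
    rewrite /g Ef2 inE.
    have := Hadj Bv Bf; rewrite Ev' Ef2 /= => ->; rewrite Hf /=.
    by rewrite -Ef2 Er.
  - rewrite inE => /andP[Hf' Hrf'].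
    have [x Bx Ex] := pre2 (ball2_f Hv' Hf').
    case: x Bx Ex => [w|f] Bx Ex.
      by have [w' [Ew _]] := lab_inl (Hlab Bx); rewrite Ew in Ex.
    have [f2 [Ef2 _ Er]] := lab_inr (Hlab Bx).
    rewrite Ef2 in Ex; case: Ex => Ex; subst f2.
    have Hf : v \in iends f.
      by have := Hadj Bv Bx; rewrite Ev' Ef2 /= Hf'.
    exists f; last by rewrite /g Ef2.
    by rewrite inE Hf /= -Er Ef2.
move=> f1 f2; rewrite !inE => /andP[Hf1 _] /andP[Hf2 _].
have B1 := ball2_f Hv Hf1; have B2 := ball2_f Hv Hf2.
have [g1 [E1 _ _]] := lab_inr (Hlab B1).
have [g2 [E2 _ _]] := lab_inr (Hlab B2).
rewrite /g E1 E2 => Eg; subst g2.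
by have := Hinj B1 B2; rewrite E1 E2 => /(_ erefl) [].
Qed.

Lemma vbw v' : v' \in iends e2 -> exists2 v, v \in iends e1 & phi (inl v) = inl v'.
Proof.
move=> Hv'.
have [x Bx Ex] := pre2 (ball2_v Hv').
case: x Bx Ex => [v|f] Bx Ex; last first.
  by have [f2 [Ef _ _]] := lab_inr (Hlab Bx); rewrite Ef in Ex.
exists v => //.
by have := Hadj Bx (ball_self _ _); rewrite He -Ex /= Hv'.
Qed.

Lemma kept_eq q : kept q I1 rho1 e1 = kept q I2 rho2 e2.
Proof.
have [f2 [Ef _ Er]] := lab_inr (Hlab (ball_self _ _)).
rewrite He in Ef; case: Ef => Ef; subst f2.
rewrite /kept -Er He; congr andb.
apply/forallP/forallP => H v.
- apply/implyP => Hv'.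
  have [v1 Hv1 Ev] := vbw Hv'.
  have [v2 [Ev2 _ Hc]] := vfw Hv1.
  rewrite Ev in Ev2; case: Ev2 => Ev2; subst v2.
  by rewrite -Hc; exact: (implyP (H v1) Hv1).
- apply/implyP => Hv.
  have [v2 [_ Hv2 Hc]] := vfw Hv.
  by rewrite Hc; exact: (implyP (H v2) Hv2).
Qed.

Lemma ih0_eq : ih0 e2 = ih0 e1.
Proof.
have [f2 [Ef Eh _]] := lab_inr (Hlab (ball_self _ _)).
by rewrite He in Ef; case: Ef => ->.
Qed.
End RL.

Lemma ralg_local (r D : nat) : local 2 (ralg r D).
Proof.
move=> I1 I2 rho1 rho2 e1 e2 [phi [He Hinj Him Hlab Hadj]].
by rewrite /ralg (ih0_eq He Hlab) (kept_eq He Hinj Him Hlab Hadj).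
Qed.

End Algs.
Arguments det_alg {R} D I e.
Arguments ralg {R} r D I om e.
Arguments kept {R} q I om e.
Arguments Ncnt {R} I om v.


Section Det.
Variable R : realFieldType.

Lemma flr_props (q : nat) (x : R) : 0 <= x <= 1 ->
  let n := (flr (q%:R * x / 2) q)%:R in
  [/\ n <= q%:R * x / 2, q%:R * x / 2 < n + 1 & 0 <= n].
Proof.
move=> /andP[x0 x1] n.
have q0 : 0 <= (q%:R : R) by rewrite ler0n.
have y0 : 0 <= q%:R * x / 2 by apply: divr_ge0 => //; apply: mulr_ge0.
split; [exact: flr_le | | by rewrite ler0n].
apply: flr_gt.
have : q%:R * x <= q%:R * 1 by apply: ler_wpM2l.
lra.
Qed.

Lemma det_pt (q : nat) (x : R) : (0 < q)%N -> 0 <= x <= 1 ->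
  let h := ((flr (q%:R * x / 2) q).+1)%:R / (q%:R : R) in
  [/\ x / 2 <= h, h <= x / 2 + 1 / q%:R & ((2 <= q)%N -> h <= 1)].
Proof.
move=> q0 xb h.
have [Hn1 Hn2 Hn0] := flr_props q xb.
set n := (flr _ _) in Hn1 Hn2 Hn0 h *.
have Q0 : 0 < (q%:R : R) by rewrite ltr0n.
have E : (n.+1)%:R = n%:R + 1 :> R by rewrite -natr1.
move: (xb) => /andP[x0 x1].
split.
- rewrite /h ler_pdivlMr // E. lra.
- rewrite /h ler_pdivrMr // E mulrDl mul1r mulVf ?gt_eqF //.
  have -> : x / 2 * q%:R = q%:R * x / 2 by rewrite mulrC mulrA.
  lra.
- move=> q2; rewrite /h ler_pdivrMr // mul1r E.
  have Q2 : 2 <= (q%:R : R) by rewrite (ler_nat R 2 q).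
  have : q%:R * x <= q%:R * 1 by apply: ler_wpM2l => //; exact: ltW.
  lra.
Qed.

End Det.


Section DetOk.
Variable R : realFieldType.

Lemma aux1 (a b : R) : a <= b -> 0 <= b -> a <= 1/2 * (10%:R * b).
Proof. move=> *; lra. Qed.
Lemma aux2 (s t : R) : s <= 1 -> t <= 1/2 -> s/2 + t <= 1.
Proof. move=> *; lra. Qed.

Lemma good_posD r D (I : instance R) : good_instance r D I -> forall e : iE I, (0 < D)%N.
Proof.
case=> _ Hne _ Hdeg _ e.
have [v Hv] := set0Pn _ (Hne e).
apply: leq_trans (Hdeg v); apply/card_gt0P; exists e; by rewrite inE.
Qed.

Lemma sum_star_const (I : instance R) (v : iV I) (c : R) :
  \sum_(e | v \in iends e) c = #|[set e : iE I | v \in iends e]|%:R * c.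
Proof.
rewrite (eq_bigl (fun e => e \in [set e : iE I | v \in iends e])); last by move=> e; rewrite inE.
by rewrite sumr_const mulr_natl.
Qed.

Lemma det_ok r D (I : instance R) : good_instance r D I ->
  frac_matching (@iends R I) (@ih0 R I) ->
  [/\ frac_matching (@iends R I) (det_alg D I), qproper (10 * D) (det_alg D I) &
      weight (@iw R I) (@ih0 R I) / 2 <= weight (@iw R I) (det_alg D I)].
Proof.
move=> G [Hx Hs].
have PD := good_posD G.
have G' := G; case: G' => _ _ _ Hdeg [Hw _].
have q2 : forall e : iE I, (2 <= 10 * D)%N by move=> e; have := PD e; lia.
split.
- split.
  + move=> e; have [h1 _ h3] := det_pt (leq_trans (isT : (0 < 2)%N) (q2 e)) (Hx e).
    rewrite /det_alg; apply/andP; split; last exact: h3 (q2 e).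
    by apply: divr_ge0; rewrite ler0n.
  + move=> v; case: (posnP D) => [D0|Dp].
      rewrite big1 // => e _; by rewrite /det_alg D0 muln0 invr0 mulr0.
    have qp : (0 < 10 * D)%N by lia.
    apply: (@le_trans _ _ (\sum_(e | v \in iends e) (ih0 e / 2 + 1 / (10 * D)%:R))).
      apply: ler_sum => e _; by have [_ h2 _] := det_pt qp (Hx e).
    rewrite big_split /= -mulr_suml sum_star_const.
    have := Hs v; have := Hdeg v.
    set n := #|_|; move=> Hn Hsv.
    have Hn' : n%:R <= D%:R :> R by rewrite ler_nat.
    have -> : n%:R * (1 / (10 * D)%:R) = n%:R / (10 * D)%:R :> R by rewrite mul1r.
    have : n%:R / (10 * D)%:R <= 1 / 2 :> R.
      rewrite ler_pdivrMr ?ltr0n // natrM.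
      have D0 : 0 <= D%:R :> R by rewrite ler0n.
      by apply: aux1.
    by apply: aux2.
- by move=> e; exists (flr ((10 * D)%:R * ih0 e / 2) (10 * D)).+1.
- rewrite /weight mulr_suml; apply: ler_sum => e _.
  have [h1 _ _] := det_pt (leq_trans (isT : (0 < 2)%N) (q2 e)) (Hx e).
  by rewrite -mulrA; apply: ler_wpM2l.
Qed.
End DetOk.


Section Prob.
Variable R : realFieldType.

Lemma E_prod (X : finType) (mu g : X -> bool -> R) :
  \sum_(om : {ffun X -> bool}) (\prod_x mu x (om x)) * (\prod_x g x (om x)) =
  \prod_x \sum_b mu x b * g x b.
Proof. by rewrite bigA_distr_bigA; apply: eq_bigr => om _; rewrite -big_split. Qed.

Lemma E_ind (I : instance R) (mu : node I -> bool -> R)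
  (Hmu : forall x, mu x true + mu x false = 1) (T : {set iE I}) :
  \sum_(om : {ffun node I -> bool}) (\prod_x mu x (om x)) * \prod_(f in T) ((om (inr f) : nat)%:R) =
  \prod_(f in T) mu (inr f) true.
Proof.
pose g (x : node I) (b : bool) : R :=
  match x with inl _ => 1 | inr f => if f \in T then (b : nat)%:R else 1 end.
transitivity (\sum_(om : {ffun node I -> bool}) (\prod_x mu x (om x)) * (\prod_x g x (om x))).
  apply: eq_bigr => om _; congr (_ * _).
  by rewrite [RHS]big_sumType /= [X in X * _]big1 // mul1r big_mkcond.
rewrite E_prod big_sumType /= big1 ?mul1r; last first.
  by move=> v _; rewrite big_bool /= !mulr1 Hmu.
rewrite [RHS]big_mkcond; apply: eq_bigr => f _.
rewrite big_bool /=; case: (f \in T); first by rewrite mulr1 mulr0 addr0.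
by rewrite !mulr1 Hmu.
Qed.

End Prob.


Section Esym.
Variables (R : realFieldType) (F : finType) (p : F -> R).
Hypothesis p0 : forall f, 0 <= p f.

Definition esymm (A : {set F}) (k : nat) : R :=
  \sum_(S : {set F} | (S \subset A) && (#|S| == k)) \prod_(f in S) p f.

Lemma esym_ge0 (A : {set F}) k : 0 <= esymm A k.
Proof. by apply: sumr_ge0 => S _; apply: prodr_ge0 => f _. Qed.

Lemma esym0 (A : {set F}) : esymm A 0 = 1.
Proof.
rewrite /esymm (big_pred1 set0) ?big_set0 // => S /=.
by rewrite cards_eq0; case: eqP => [->|]; rewrite ?sub0set ?andbF.
Qed.

Lemma esym_sub f (A : {set F}) k :
  \sum_(S : {set F} | [&& S \subset A, #|S| == k.+1 & f \in S]) \prod_(g in S :\ f) p g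
  <= esymm A k.
Proof.
rewrite (reindex_onto (fun S' => f |: S') (fun S => S :\ f)); last first.
  by move=> S /and3P[_ _ fS]; rewrite setD1K.
rewrite /esymm big_mkcond [X in _ <= X]big_mkcond /=; apply: ler_sum => S _.
case: ifP => [/andP[/and3P[sub cS _] /eqP E]|_]; last first.
  by case: ifP => // _; apply: prodr_ge0.
have fS : f \notin S.
  by apply/negP => fS; have := setD11 f (f |: S); rewrite E fS.
rewrite E.
have -> : (S \subset A) by apply: subset_trans sub; apply: subsetUr.
by move: cS; rewrite cardsU1 fS add1n eqSS => ->.
Qed.

Lemma esym_rec (A : {set F}) k :
  k.+1%:R * esymm A k.+1 <= (\sum_(f in A) p f) * esymm A k.
Proof.
rewrite /esymm mulr_sumr mulr_suml.
apply: (@le_trans _ _ (\sum_(f in A) p f *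
    \sum_(S : {set F} | [&& S \subset A, #|S| == k.+1 & f \in S]) \prod_(g in S :\ f) p g));
  last first.
  apply: ler_sum => f _; apply: ler_wpM2l => //; exact: esym_sub.
rewrite le_eqVlt; apply/orP; left; apply/eqP.
have -> : \sum_(S : {set F} | (S \subset A) && (#|S| == k.+1)) k.+1%:R * \prod_(f in S) p f =
    \sum_(S : {set F} | (S \subset A) && (#|S| == k.+1)) \sum_(f in A)
        (if f \in S then p f * \prod_(g in S :\ f) p g else 0).
  apply: eq_bigr => S /andP[sub /eqP cS].
  rewrite -big_mkcondr /=.
  have -> : \sum_(f in A | f \in S) p f * \prod_(g in S :\ f) p g =
            \sum_(f in S) p f * \prod_(g in S :\ f) p g.
    apply: eq_bigl => f; case fS: (f \in S); rewrite ?andbF ?andbT //.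
    exact: (subsetP sub).
  have -> : \sum_(f in S) p f * \prod_(g in S :\ f) p g = \sum_(f in S) \prod_(g in S) p g.
    by apply: eq_bigr => f fS; rewrite [RHS](big_setD1 f fS).
  by rewrite sumr_const cS mulr_natl.
rewrite exchange_big /=; apply: eq_bigr => f fA.
rewrite mulr_sumr big_mkcond [RHS]big_mkcond /=; apply: eq_bigr => S _.
by case: (S \subset A); case: (#|S| == k.+1); case: (f \in S); rewrite ?mulr0.
Qed.

Lemma esym_bound (A : {set F}) k : esymm A k * k`!%:R <= (\sum_(f in A) p f) ^+ k.
Proof.
have s0 : 0 <= \sum_(f in A) p f by apply: sumr_ge0.
elim: k => [|k IH]; first by rewrite esym0 fact0 mul1r expr0.
rewrite factS natrM.
have -> : esymm A k.+1 * (k.+1%:R * k`!%:R) = (k.+1%:R * esymm A k.+1) * k`!%:R by ring.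
apply: (@le_trans _ _ ((\sum_(f in A) p f) * esymm A k * k`!%:R)).
  by apply: ler_wpM2r; [rewrite ler0n | exact: esym_rec].
by rewrite exprS -mulrA; apply: ler_wpM2l.
Qed.

End Esym.


Section Fact.
Variable R : realFieldType.

Lemma bern (t : R) n : 0 <= t <= 1 -> 1 - n%:R * t <= (1 - t) ^+ n.
Proof.
move=> /andP[t0 t1]; elim: n => [|n IH]; first by rewrite mul0r subr0 expr0.
rewrite exprSr -natr1.
set P := (1 - t) ^+ n in IH *.
have h1 : 0 <= (P - (1 - n%:R * t)) * (1 - t) by apply: mulr_ge0; lra.
have h2 : 0 <= n%:R * t * t by apply: mulr_ge0 => //; apply: mulr_ge0 => //; rewrite ler0n.
nra.
Qed.

Lemma step_fact (u : nat) : (u.+1%:R : R) ^+ u <= 4%:R * (u%:R) ^+ u.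
Proof.
case: u => [|u]; first by rewrite !expr0 mulr1 ler1n.
set n := u.+1.
have n0 : 0 < (n%:R : R) by rewrite ltr0n.
set t : R := 1 / (n.+1)%:R.
have N1 : 0 < (n.+1%:R : R) by rewrite ltr0n.
have Et : 1 - t = n%:R / n.+1%:R.
  rewrite /t -natr1; field; rewrite natr1; exact: lt0r_neq0.
have t0 : 0 <= t by rewrite /t divr_ge0 ?ler0n.
have t1 : t <= 1 by rewrite /t ler_pdivrMr // mul1r ler1n.
set a := uphalf n.
have Ha : 1 / 2 <= (1 - t) ^+ a.
  apply: le_trans (bern a (t:=t) _); last by rewrite t0 t1.
  have a2 : (2 * a <= n.+1)%N by rewrite /a uphalf_half; have := odd_double_half n; rewrite -muln2; case: (odd n) => /=; lia.
  have : (2 * a)%:R <= n.+1%:R :> R by rewrite ler_nat.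
  rewrite natrM => H.
  have : a%:R * t <= 1 / 2.
    rewrite /t mulrA mulr1 ler_pdivrMr //. lra.
  lra.
have Hb : (1 - t) ^+ (2 * a) <= (1 - t) ^+ n.
  apply: ler_wiXn2l; [lra | lra |].
  rewrite /a uphalf_half; have := odd_double_half n; rewrite -muln2; case: (odd n) => /=; lia.
have Hc : 1 / 4 <= (1 - t) ^+ (2 * a).
  rewrite mulnC exprM expr2.
  have : 1/2 * (1/2) <= (1 - t) ^+ a * (1 - t) ^+ a by apply: ler_pM => //; lra.
  lra.
have : 1 / 4 <= (1 - t) ^+ n by apply: le_trans Hc Hb.
rewrite Et.
rewrite expr_div_n ler_pdivlMr ?exprn_gt0 //.
lra.
Qed.

Lemma fact_bound (u : nat) : (u%:R : R) ^+ u <= 4%:R ^+ u * u`!%:R.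
Proof.
elim: u => [|u IH]; first by rewrite !expr0 mul1r.
rewrite factS natrM.
have h2 := step_fact u.
have p0 : 0 <= (u.+1%:R : R) by rewrite ler0n.
apply: (@le_trans _ _ (u.+1%:R * (4%:R * 4%:R ^+ u * u`!%:R))).
  rewrite exprS; apply: ler_wpM2l => //; apply: le_trans h2 _; rewrite -mulrA; apply: ler_wpM2l => //.
rewrite le_eqVlt; apply/orP; left; apply/eqP; rewrite exprS; ring.
Qed.
End Fact.


Lemma qfacts (r : nat) : (2 <= r)%N ->
  [/\ (20 <= q_rand r)%N, (q_rand r <= 3 * (q_rand r)./2)%N & (4 * r <= 2 ^ (q_rand r)./2)%N].
Proof.
move=> r2.
have H1 : (r ^ 20 <= 2 ^ q_rand r)%N by apply: up_logP.
have H2 : (2 ^ 20 <= r ^ 20)%N by rewrite leq_exp2r.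
have q20 : (20 <= q_rand r)%N.
  rewrite leqNgt; apply/negP => lt.
  have A1 : (2 ^ q_rand r <= 2 ^ 19)%N by apply: leq_pexp2l => //; lia.
  have A2 : (2 ^ 19 < 2 ^ 20)%N by rewrite ltn_exp2l.
  move: A1 A2 H1 H2; generalize (2 ^ q_rand r)%N (2 ^ 19)%N (2 ^ 20)%N (r ^ 20)%N.
  move=> *; lia.
set q := q_rand r in H1 q20 *.
set u := q./2.
have Hq : (q = odd q + 2 * u)%N by rewrite /u; have := odd_double_half q; rewrite -muln2; lia.
split => //.
- by move: Hq; case: (odd q) => /=; lia.
- have E : (2 ^ q <= 2 * (2 ^ u) ^ 2)%N.
    rewrite -expnM -expnS; apply: leq_pexp2l => //.
    by move: Hq; case: (odd q) => /=; lia.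
  have r18 : (2 ^ 5 <= r ^ 18)%N.
    apply: (@leq_trans (2 ^ 18)); first by apply: leq_pexp2l.
    by rewrite leq_exp2r.
  have E2 : (r ^ 20 = r ^ 2 * r ^ 18)%N by rewrite -expnD.
  rewrite -leq_sqr expnMn.
  move: E2 H1 E r18; generalize (r ^ 20)%N (r ^ 2)%N (r ^ 18)%N ((2 ^ u) ^ 2)%N => a b c d.
  move=> -> H1 E r18.
  have : (2 ^ 5 * b <= c * b)%N by apply: leq_mul.
  rewrite (_ : (4 ^ 2 = 16)%N) // (_ : (2 ^ 5 = 32)%N) //.
  nia.
Qed.

Section Small.
Variable R : realFieldType.

Lemma small_bound (e s : R) (u q r : nat) :
  e * u`!%:R <= s ^+ u -> 0 <= s -> s <= q%:R / 32%:R ->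
  (q <= 3 * u)%N -> (4 * r <= 2 ^ u)%N -> (0 < r)%N -> e <= 1 / (2 * r)%:R.
Proof.
move=> He s0 sq qu ru r0.
have K0 : 0 < (u`!%:R : R) by rewrite ltr0n fact_gt0.
have sq' : s <= 3%:R / 32%:R * u%:R.
  apply: le_trans sq _.
  have : (q%:R : R) <= 3%:R * u%:R by rewrite -natrM ler_nat.
  lra.
have h1 : s ^+ u <= (3%:R / 32%:R * u%:R) ^+ u.
  by apply: lerXn2r => //; rewrite nnegrE //; apply: le_trans sq'.
rewrite exprMn in h1.
have h2 : (3%:R / 32%:R : R) ^+ u * u%:R ^+ u <= (3%:R / 32%:R) ^+ u * (4%:R ^+ u * u`!%:R).
  by apply: ler_wpM2l; [apply: exprn_ge0; lra | apply: fact_bound].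
have h3 : (3%:R / 32%:R : R) ^+ u * 4%:R ^+ u = (3%:R / 8%:R) ^+ u.
  by rewrite -exprMn; congr (_ ^+ _); field.
have h4 : (3%:R / 8%:R : R) ^+ u <= (1 / 2) ^+ u.
  by apply: lerXn2r; rewrite ?nnegrE; lra.
have h5 : (1 / 2 : R) ^+ u <= 1 / (4 * r)%:R.
  rewrite expr_div_n expr1n -natrX.
  rewrite ler_pdivrMr ?ltr0n ?expn_gt0 // mulrC mulrA mulr1 ler_pdivlMr ?ltr0n ?muln_gt0 //.
  by rewrite mul1r ler_nat.
have : e * u`!%:R <= 1 / (4 * r)%:R * u`!%:R.
  apply: (le_trans He); apply: (le_trans h1); rewrite mulrA h3 in h2.
  apply: (le_trans h2); apply: ler_wpM2r; first exact: ltW.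
  exact: le_trans h4 h5.
rewrite ler_pM2r // => H.
apply: le_trans H _.
rewrite !mul1r natrM [(2 * r)%:R]natrM.
have r0' : 0 < (r%:R : R) by rewrite ltr0n.
rewrite lef_pV2 ?posrE ?mulr_gt0 ?ltr0n //.
apply: ler_wpM2r; [exact: ltW | by rewrite ler_nat].
Qed.
End Small.


Section Rand1.
Variable R : realFieldType.

Lemma pp01 q (x : R) : 0 <= pp q x <= 1.
Proof. rewrite /pp; case: ifP => // _; by rewrite lexx ler01. Qed.

Lemma prr_ok (r D : nat) (l : nlabel R unit) :
  (forall o, 0 <= prr r D l o) /\ \sum_o prr r D l o = 1.
Proof.
have := pp01 (q_rand r) (match l with LV _ _ => 0 | LE _ _ x _ => x end).
case: l => [? ?|? ? x ?] /= /andP[p0 p1]; split; rewrite ?big_bool /=.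
- by case=> //; rewrite ler01.
- by rewrite add0r.
- by case=> //; rewrite subr_ge0.
- by rewrite addrC subrK.
Qed.

Lemma kk_props q (x : R) : 0 <= x <= 1 ->
  [/\ (kk q x)%:R <= q%:R * x / 2, 0 <= frc q x, frc q x < 1 &
      pp q x = frc q x / 16%:R].
Proof.
move=> xb; have [h1 h2 h3] := flr_props q xb.
have f0 : 0 <= frc q x by rewrite /frc /kk subr_ge0.
have f1 : frc q x < 1 by rewrite /frc /kk; lra.
split => //; rewrite /pp ifT //; apply/andP; split; first by apply: divr_ge0.
by rewrite ler_pdivrMr ?ltr0n // mul1r; apply: le_trans (ltW f1) _; rewrite ler1n.
Qed.

Lemma sum_bool_card (T : finType) (P b : pred T) :
  (\sum_(t | P t) (b t : nat) = #|[set t | P t && b t]|)%N.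
Proof.
rewrite -sum1_card big_mkcond [RHS]big_mkcond /=.
apply: eq_bigr => t _; rewrite inE; by case: (P t); case: (b t).
Qed.

Lemma ralg_valid (r D : nat) (I : instance R) (om : node I -> bool) :
  (2 <= r)%N -> frac_matching (@iends R I) (@ih0 R I) ->
  frac_matching (@iends R I) (ralg r D I om) /\ qproper (q_rand r) (ralg r D I om).
Proof.
move=> r2 [Hx Hs].
have [q20 _ _] := qfacts r2.
set q := q_rand r in q20 *.
have Q0 : 0 < (q%:R : R) by rewrite ltr0n; lia.
have Q20 : 20%:R <= (q%:R : R) by rewrite ler_nat.
split; last by move=> e; exists (kk q (ih0 e) + kept q I om e)%N.
split.
- move=> e; have [k1 _ _ _] := kk_props q (Hx e).
  rewrite /ralg -/q; apply/andP; split; first by apply: divr_ge0; rewrite ler0n.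
  rewrite ler_pdivrMr // mul1r natrD.
  have b1 : ((kept q I om e : nat)%:R : R) <= 1 by case: (kept _ _ _ _).
  have : q%:R * ih0 e <= q%:R * 1 :> R by apply: ler_wpM2l; [exact: ltW | case/andP: (Hx e)].
  lra.
- move=> v; rewrite /ralg -/q -mulr_suml ler_pdivrMr // mul1r.
  rewrite (eq_bigr (fun e => (kk q (ih0 e))%:R + ((kept q I om e : nat)%:R : R))); last by move=> e _; rewrite natrD.
  rewrite big_split /=.
  have hk : \sum_(e | v \in iends e) ((kk q (ih0 e))%:R : R) <= q%:R / 2.
    apply: (@le_trans _ _ (\sum_(e | v \in iends e) q%:R * ih0 e / 2)).
      by apply: ler_sum => e _; have [k1 _ _ _] := kk_props q (Hx e).
    rewrite -mulr_suml -mulr_sumr.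
    have := Hs v; set S := \sum_(_ | _) _ => HS.
    have : q%:R * S <= q%:R * 1 :> R by apply: ler_wpM2l => //; exact: ltW.
    lra.
  have hb : (2 * \sum_(e | v \in iends e) (kept q I om e : nat) <= q)%N.
    case: (boolP [exists e, (v \in iends e) && kept q I om e]).
      move=> /existsP[e /andP[ve /andP[_ /forallP /(_ v)]]].
      rewrite ve /= => HN.
      apply: leq_trans HN; rewrite leq_mul2l /=.
      rewrite sum_bool_card /Ncnt; apply: subset_leq_card.
      apply/subsetP => f; rewrite !inE => /andP[-> /andP[-> _]] //.
    move=> Hn; rewrite big1 // => e ve.
    by case: (boolP (kept q I om e)) => // ke; case/negP: Hn; apply/existsP; exists e; rewrite ve ke.
  have : (2 * \sum_(e | v \in iends e) (kept q I om e : nat))%:R <= q%:R :> R by rewrite ler_nat.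
  rewrite natrM natr_sum; lra.
Qed.
End Rand1.


Lemma subset_card_exists (T : finType) (k : nat) : forall (B : {set T}),
  (k <= #|B|)%N -> exists2 S : {set T}, S \subset B & #|S| = k.
Proof.
elim: k => [|k IH] B Hk; first by exists set0; rewrite ?sub0set ?cards0.
have [x xB] : exists x, x \in B by apply/card_gt0P; lia.
have : (k <= #|B :\ x|)%N by move: Hk; rewrite (cardsD1 x B) xB; lia.
case/IH => S SB cS; exists (x |: S).
  by rewrite subUset sub1set xB (subset_trans SB) // subD1set.
have xS : x \notin S by apply/negP => /(subsetP SB); rewrite !inE eqxx.
by rewrite cardsU1 xS cS.
Qed.

Section Rand2.
Variable R : realFieldType.

Definition ind (I : instance R) (T : {set iE I}) (om : node I -> bool) : R :=
  \prod_(f in T) ((om (inr f) : nat)%:R).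

Definition Av (I : instance R) (v : iV I) (e : iE I) : {set iE I} :=
  [set f | (v \in iends f) && (f != e)].

Lemma ind_ge0 I T om : 0 <= @ind I T om.
Proof. by apply: prodr_ge0 => f _; rewrite ler0n. Qed.

Lemma kept_lb (I : instance R) (q u : nat) (Hu : forall N, (q < 2 * N)%N -> (u < N)%N)
  (om : node I -> bool) (e : iE I) :
  ind [set e] om - \sum_(v in iends e) \sum_(S : {set iE I} | (S \subset Av v e) && (#|S| == u)) ind (e |: S) om
  <= ((kept q I om e : nat)%:R : R).
Proof.
have ieS : forall S, ind (e |: S) om = (om (inr e) : nat)%:R * ind (S :\ e) om.
  move=> S; rewrite /ind (big_setD1 e) ?setU11 //.
  have -> : (e |: S) :\ e = S :\ e by apply/setP => f; rewrite !inE; case: eqP.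
  by [].
have ie : ind [set e] om = (om (inr e) : nat)%:R by rewrite /ind big_set1.
case ae: (om (inr e)); last first.
- rewrite /kept ie ae /= big1 ?subr0 //.
  by move=> v _; rewrite big1 // => S _; rewrite ieS ae mul0r.
have sum0 : 0 <= \sum_(v in iends e) \sum_(S : {set iE I} | (S \subset Av v e) && (#|S| == u)) ind (e |: S) om.
  by apply: sumr_ge0 => v _; apply: sumr_ge0 => S _; apply: ind_ge0.
rewrite ie ae /= mulr1n.
case: (boolP (kept q I om e)) => ke; first by rewrite /= mulr1n; lra.
move: ke; rewrite /kept ae /= negb_forall => /existsP[v].
rewrite negb_imply -ltnNge => /andP[ve HN].
set Aset := [set f | (v \in iends f) && om (inr f)] in HN.
have eA : e \in Aset by rewrite inE ve ae.
have := Hu _ HN; rewrite /Ncnt -/Aset (cardsD1 e Aset) eA add1n ltnS.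
case/subset_card_exists => S0 S0B cS0.
have S0A : S0 \subset Av v e.
  apply/subsetP => f /(subsetP S0B); rewrite !inE => /andP[-> /andP[-> _]] //.
have i1 : ind (e |: S0) om = 1.
  rewrite /ind big1 // => f; rewrite !inE => /orP[/eqP -> | /(subsetP S0B)]; first by rewrite ae.
  by rewrite !inE => /andP[_ /andP[_ ->]].
have : 1 <= \sum_(v in iends e) \sum_(S : {set iE I} | (S \subset Av v e) && (#|S| == u)) ind (e |: S) om.
  rewrite (bigD1 v) //=.
  apply: (@le_trans _ _ (\sum_(S : {set iE I} | (S \subset Av v e) && (#|S| == u)) ind (e |: S) om)).
    rewrite (bigD1 S0) /=; last by rewrite S0A cS0 eqxx.
    rewrite i1 lerDl; apply: sumr_ge0 => S _; exact: ind_ge0.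
  rewrite lerDl; apply: sumr_ge0 => w _; apply: sumr_ge0 => S _; exact: ind_ge0.
move=> H; rewrite /=; lra.
Qed.

End Rand2.


Section Rand3.
Variable R : realFieldType.
Variables (r D : nat) (I : instance R).
Hypotheses (G : good_instance r D I) (FM : frac_matching (@iends R I) (@ih0 R I)).

Let q := q_rand r.
Let u := q./2.
Definition mu (x : node I) (b : bool) : R := prr r D (lab (@nounif R I) x) b.
Let pe (f : iE I) : R := pp q (ih0 f).

Lemma mu_sum x : mu x true + mu x false = 1.
Proof. by have [_ H] := prr_ok r D (lab (@nounif R I) x); rewrite big_bool in H. Qed.

Lemma mu_ge0 x b : 0 <= mu x b.
Proof. by have [H _] := prr_ok r D (lab (@nounif R I) x); apply: H. Qed.

Lemma mu_inr f : mu (inr f) true = pe f.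
Proof. by []. Qed.

Lemma pe_ge0 f : 0 <= pe f.
Proof. by have /andP[] := pp01 q (ih0 f). Qed.

Lemma Eind (T : {set iE I}) :
  \sum_(om : {ffun node I -> bool}) (\prod_x mu x (om x)) * ind T om = \prod_(f in T) pe f.
Proof. by rewrite /ind E_ind //; exact: mu_sum. Qed.

Lemma r2 : (2 <= r)%N. Proof. by case: G => [[]]. Qed.

Lemma Hu N : (q < 2 * N)%N -> (u < N)%N.
Proof. rewrite /u; have := odd_double_half q; rewrite -muln2; case: (odd q) => /=; lia. Qed.

Lemma s_bound v e : \sum_(f in Av v e) pe f <= q%:R / 32%:R.
Proof.
case: FM => Hx Hs.
apply: (@le_trans _ _ (\sum_(f | v \in iends f) pe f)).
  rewrite big_mkcond [X in _ <= X]big_mkcond /=; apply: ler_sum => f _.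
  rewrite inE; case: (v \in iends f) => /=; last by case: (f != e).
  by case: (f != e) => //; exact: pe_ge0.
apply: (@le_trans _ _ (\sum_(f | v \in iends f) (q%:R * ih0 f / 2) / 16%:R)).
  apply: ler_sum => f _; have [k1 f0 _ E] := kk_props q (Hx f).
  rewrite /pe E ler_pdivrMr ?ltr0n // divfK ?pnatr_eq0 //.
  rewrite /frc; have : 0 <= ((kk q (ih0 f))%:R : R) by rewrite ler0n. lra.
rewrite -mulr_suml -mulr_suml -mulr_sumr.
have := Hs v; set S := \sum_(_ | _) _ => HS.
have Q0 : 0 <= (q%:R : R) by rewrite ler0n.
have : q%:R * S <= q%:R * 1 :> R by apply: ler_wpM2l.
lra.
Qed.

Lemma esym_small v e : esymm pe (Av v e) u <= 1 / (2 * r)%:R.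
Proof.
have [_ qu ru] := qfacts r2.
apply: (small_bound (q := q) (s := \sum_(f in Av v e) pe f)) => //.
- apply: esym_bound; exact: pe_ge0.
- by apply: sumr_ge0 => f _; exact: pe_ge0.
- exact: s_bound.
- by have := r2; lia.
- exact: ru.
- by have := r2; lia.
Qed.

Lemma Ekept e :
  pe e / 2 <= \sum_(om : {ffun node I -> bool}) (\prod_x mu x (om x)) * (kept q I om e : nat)%:R.
Proof.
have P0 : forall om : {ffun node I -> bool}, 0 <= \prod_x mu x (om x).
  by move=> om; apply: prodr_ge0 => x _; exact: mu_ge0.
apply: (@le_trans _ _ (\sum_(om : {ffun node I -> bool}) (\prod_x mu x (om x)) *
  (ind [set e] om - \sum_(v in iends e) \sum_(S : {set iE I} | (S \subset Av v e) && (#|S| == u)) ind (e |: S) om))); last first.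
  by apply: ler_sum => om _; apply: ler_wpM2l => //; apply: kept_lb; exact: Hu.
have -> : \sum_(om : {ffun node I -> bool}) (\prod_x mu x (om x)) *
  (ind [set e] om - \sum_(v in iends e) \sum_(S : {set iE I} | (S \subset Av v e) && (#|S| == u)) ind (e |: S) om)
  = pe e - \sum_(v in iends e) \sum_(S : {set iE I} | (S \subset Av v e) && (#|S| == u)) pe e * \prod_(f in S) pe f.
  under eq_bigr do rewrite mulrBr.
  rewrite sumrB Eind big_set1; congr (_ - _).
  under eq_bigr do rewrite mulr_sumr.
  rewrite exchange_big /=; apply: eq_bigr => v ve.
  under eq_bigr do rewrite mulr_sumr.
  rewrite exchange_big /=; apply: eq_bigr => S /andP[SA _].
  rewrite Eind big_setU1 //=.
  by apply/negP => /(subsetP SA); rewrite inE eqxx andbF.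
have Hr : (#|iends e| <= r)%N by case: G => _ _ Hr _ _; exact: Hr.
have : \sum_(v in iends e) \sum_(S : {set iE I} | (S \subset Av v e) && (#|S| == u)) pe e * \prod_(f in S) pe f
       <= pe e / 2.
  under eq_bigr do rewrite -mulr_sumr.
  rewrite -mulr_sumr -/(esymm _ _ _).
  apply: (@le_trans _ _ (pe e * \sum_(v in iends e) 1 / (2 * r)%:R)).
    apply: ler_wpM2l; first exact: pe_ge0.
    by apply: ler_sum => v _; exact: esym_small.
  rewrite sumr_const.
  apply: ler_wpM2l; first exact: pe_ge0.
  rewrite -[X in X <= _]mulr_natl.
  have r0 : (0 < r)%N by have := r2; lia.
  rewrite mulrA mulr1 natrM ler_pdivrMr ?mulr_gt0 ?ltr0n //.
  have : (#|iends e|%:R : R) <= r%:R by rewrite ler_nat.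
  have : (0 : R) < r%:R by rewrite ltr0n.
  move=> *; nra.
move=> H.
have := pe_ge0 e; lra.
Qed.

Lemma Eweight :
  weight (@iw R I) (@ih0 R I) / 64%:R <=
  \sum_(om : {ffun node I -> bool}) (\prod_x mu x (om x)) * weight (@iw R I) (ralg r D I om).
Proof.
have P1 : \sum_(om : {ffun node I -> bool}) (\prod_x mu x (om x)) = 1.
  transitivity (\sum_(om : {ffun node I -> bool}) (\prod_x mu x (om x)) * ind set0 om).
    by apply: eq_bigr => om _; rewrite /ind big_set0 mulr1.
  by rewrite Eind big_set0.
have [q20 _ _] := qfacts r2.
have Q0 : 0 < (q%:R : R) by rewrite ltr0n; lia.
have [_ _ _ _ [Hw _]] := G.
have [Hx _] := FM.
rewrite /weight mulr_suml.
under [X in _ <= X]eq_bigr do rewrite mulr_sumr.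
rewrite [X in _ <= X]exchange_big /=; apply: ler_sum => e _.
set k : R := (kk q (ih0 e))%:R.
have E1 : \sum_(om : {ffun node I -> bool}) (\prod_x mu x (om x)) * (iw e * ralg r D I om e) =
    iw e / q%:R * (k + \sum_(om : {ffun node I -> bool}) (\prod_x mu x (om x)) * (kept q I om e : nat)%:R).
  transitivity (\sum_(om : {ffun node I -> bool}) iw e / q%:R *
       (k * (\prod_x mu x (om x)) + (\prod_x mu x (om x)) * (kept q I om e : nat)%:R)).
    by apply: eq_bigr => om _; rewrite /ralg natrD -/q -/k; ring.
  by rewrite -mulr_sumr big_split /= -mulr_sumr P1 mulr1.
rewrite E1.
have Hk := Ekept e.
have [k1 f0 f1 Epe] := kk_props q (Hx e).
rewrite -/k in k1.
have k0 : 0 <= k by rewrite ler0n.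
have a0 := Hw e.
have xq : ih0 e / 64%:R <= (k + pe e / 2) / q%:R.
  rewrite ler_pdivlMr // /pe Epe /frc -/k.
  have -> : ih0 e / 64%:R * q%:R = (q%:R * ih0 e / 2) / 32%:R by field.
  lra.
rewrite -[iw e * ih0 e / 64%:R]mulrA -[iw e / q%:R * _]mulrA; apply: ler_wpM2l => //.
apply: (le_trans xq).
rewrite [X in X <= _]mulrC; apply: ler_wpM2l; first by rewrite invr_ge0; exact: ltW.
lra.
Qed.

End Rand3.



Lemma weight_ge0 (R : realFieldType) (I : instance R) r D : good_instance r D I ->
  frac_matching (@iends R I) (@ih0 R I) -> 0 <= weight (@iw R I) (@ih0 R I).
Proof.
move=> [_ _ _ _ [Hw _]] [Hx _]; apply: sumr_ge0 => e _; apply: mulr_ge0 => //.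
by case/andP: (Hx e).
Qed.

Lemma ratrc (R : realFieldType) : ratr ((128%:R)^-1 : rat) = (128%:R : R)^-1.
Proof. by rewrite fmorphV rmorph_nat. Qed.

Theorem propositionB2 :
  exists c : rat, 0 < c /\
  (* 1. deterministic *)
  (exists T : nat, forall R : realFieldType,
    exists alg : nat -> nat -> forall I : instance R, iE I -> R,
      (forall r D, local T (fun I (_ : node I -> unit) => alg r D I)) /\
      (forall (r D : nat) (I : instance R),
        good_instance r D I ->
        frac_matching (@iends R I) (@ih0 R I) ->
        forall astar : R, is_astar (@iends R I) (@iw R I) astar ->
        astar / 2 <= weight (@iw R I) (@ih0 R I) ->
        [/\ frac_matching (@iends R I) (alg r D I),
            qproper (10 * D) (alg r D I) &
            ratr c * astar <= weight (@iw R I) (alg r D I)])) /\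
  (* 2. randomized *)
  (exists T : nat, forall R : realFieldType,
    exists (Om : finType) (pr : nat -> nat -> nlabel R unit -> Om -> R)
           (alg : nat -> nat -> forall I : instance R, (node I -> Om) -> iE I -> R),
      (forall r D l, (forall o, 0 <= pr r D l o) /\ \sum_o pr r D l o = 1) /\
      (forall r D, local T (alg r D)) /\
      (forall (r D : nat) (I : instance R),
        good_instance r D I ->
        frac_matching (@iends R I) (@ih0 R I) ->
        forall astar : R, is_astar (@iends R I) (@iw R I) astar ->
        astar / 2 <= weight (@iw R I) (@ih0 R I) ->
        (forall om : {ffun node I -> Om}, assign_prob (pr r D) om != 0 ->
           frac_matching (@iends R I) (alg r D I om) /\
           qproper (q_rand r) (alg r D I om)) /\
        ratr c * astar <=
          \sum_(om : {ffun node I -> Om})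
             assign_prob (pr r D) om * weight (@iw R I) (alg r D I om))).
Proof.
exists ((128%:R)^-1); split; first by rewrite invr_gt0 ltr0n.
split.
- exists 0%N => R; exists (fun r D I => @det_alg R D I); split.
    by move=> r D; exact: det_local.
  move=> r D I G FM astar _ Ha.
  have [h1 h2 h3] := det_ok G FM.
  split => //; rewrite ratrc.
  have w0 := weight_ge0 G FM.
  apply: le_trans h3.
  move: Ha w0; generalize (weight (@iw R I) (@ih0 R I)) => w Ha w0.
  lra.
- exists 2%N => R; exists bool, (@prr R), (@ralg R); split; first exact: prr_ok.
  split; first by move=> r D; exact: ralg_local.
  move=> r D I G FM astar _ Ha.
  have r2 : (2 <= r)%N by case: G => [[]].
  split; first by move=> om _; exact: ralg_valid.
  rewrite ratrc.
  have w0 := weight_ge0 G FM.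
  apply: le_trans (Eweight G FM).
  move: Ha w0; generalize (weight (@iw R I) (@ih0 R I)) => w Ha w0.
  lra.
Qed.
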